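(* Let $K$ be a field, $X=\{x_1,\dots,x_n\}$, $H=\langle h_1,\dots,h_r\rangle\subseteq K[X]$, $f\in K[X]$, let $Y=\{x_1,\dots,x_d\}$ be a maximum-size set of independent variables for $H$, let $Z=\{x_{d+1},\dots,x_n\}$ and $H'=HK(Y)[Z]$. Then $f\in\sqrt{H'}$ if and only if $\langle h_1,\dots,h_r,f\cdot t-1\rangle K[Y,Z,t]\cap K[Y]\neq\langle 0\rangle$, where $t$ is a new variable.
   Context: A set $Y=\{x_1,\dots,x_d\}\subseteq X$ is a maximum-size set of independent variables for $H$ if $H\cap K[Y]=\langle 0\rangle$ and for every subset $W\subseteq X$ with more than $d$ elements $H\cap K[W]\neq\langle 0\rangle$. $K(Y)$ is the field of rational functions in $x_1,\dots,x_d$ and $\sqrt{H'}$ is the radical of $H'$ in $K(Y)[Z]$. *)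

(* Defs.v *)
From HB Require Import structures.
From mathcomp Require Import all_boot all_algebra.
From mathcomp Require Import fraction.
From mathcomp.multinomials Require Import mpoly.
Set Implicit Arguments. Unset Strict Implicit. Unset Printing Implicit Defensive.
Import GRing.Theory.
Local Open Scope ring_scope.

Definition in_ideal (R : comNzRingType) (r : nat) (g : 'I_r -> R) (p : R) : Prop :=
  exists c : 'I_r -> R, p = \sum_(i < r) c i * g i.

Definition in_radical (R : comNzRingType) (r : nat) (g : 'I_r -> R) (p : R) : Prop :=
  exists k : nat, in_ideal g (p ^+ k).

(* p lies in the subring K[W] of K[x_0..x_{n-1}]: only variables of W occur *)
Definition vars_in (K : fieldType) (n : nat) (W : {set 'I_n}) (p : {mpoly K[n]}) : Prop :=
  forall m, m \in msupp p -> forall i : 'I_n, i \notin W -> m i = 0%N.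

Definition ideal_meets (K : fieldType) (n r : nat) (g : 'I_r -> {mpoly K[n]})
  (W : {set 'I_n}) : Prop :=
  exists2 p : {mpoly K[n]}, p != 0 & in_ideal g p /\ vars_in W p.

Definition max_indep_set (K : fieldType) (n r : nat) (g : 'I_r -> {mpoly K[n]})
  (W : {set 'I_n}) : Prop :=
  ~ ideal_meets g W /\
  forall W' : {set 'I_n}, (#|W| < #|W'|)%N -> ideal_meets g W'.

(* X = {x_0..x_{d+m-1}}, Y = first d variables, Z = last m variables *)
Definition Yset (d m : nat) : {set 'I_(d + m)} := [set i : 'I_(d + m) | (i < d)%N].

Definition KY (K : fieldType) (d : nat) := {fraction {mpoly K[d]}}.

(* the natural map K[X] = K[Y,Z] -> K(Y)[Z] *)
Definition toKYZ (K : fieldType) (d m : nat) (p : {mpoly K[d + m]})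
  : {mpoly (KY K d)[m]} :=
  mmap (fun c : K => (@FracField.tofrac {mpoly K[d]} (c%:MP))%:MP)
       (fun i : 'I_(d + m) => match split i with
                              | inl j => (@FracField.tofrac {mpoly K[d]} ('X_j))%:MP
                              | inr k => 'X_k
                              end) p.

(* the inclusion K[X] -> K[X,t], t being the last variable *)
Definition toKXt (K : fieldType) (n : nat) (p : {mpoly K[n]}) : {mpoly K[n.+1]} :=
  mmap (fun c : K => c%:MP) (fun i : 'I_n => 'X_(widen_ord (leqnSn n) i)) p.

Definition tvar (K : fieldType) (n : nat) : {mpoly K[n.+1]} := 'X_(@ord_max n).

Definition rabino_gens (K : fieldType) (n r : nat) (h : 'I_r -> {mpoly K[n]})
  (f : {mpoly K[n]}) : 'I_r.+1 -> {mpoly K[n.+1]} :=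
  fun i => match unlift ord_max i with
           | Some j => toKXt (h j)
           | None => toKXt f * tvar K n - 1
           end.

Definition Yset_t (d m : nat) : {set 'I_(d + m).+1} := [set i : 'I_(d + m).+1 | (i < d)%N].

(* Main.v *)
Require Import Defs.
From HB Require Import structures.
From mathcomp Require Import all_boot all_algebra.
From mathcomp Require Import fraction.
From mathcomp.multinomials Require Import mpoly.
Set Implicit Arguments. Unset Strict Implicit. Unset Printing Implicit Defensive.
Import GRing.Theory.
Local Open Scope ring_scope.
Local Open Scope quotient_scope.

Lemma fracE (R : idomainType) (x : {fraction R}) :
  exists a b : R, b != 0 /\ x = FracField.tofrac a / FracField.tofrac b.
Proof.
elim/quotW: x => r. exists (\n_r), (\d_r); split; first exact: denom_ratioP.
apply/(@mulIf _ (FracField.tofrac \d_r)); first by rewrite tofrac_eq0 denom_ratioP.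
rewrite mulfVK ?tofrac_eq0 ?denom_ratioP //.
rewrite !piE; apply/eqmodP; rewrite /= FracField.equivfE /FracField.mulf !numden_Ratio ?mulf_neq0 ?oner_neq0 ?denom_ratioP // ; by apply/eqP; rewrite !mulr1 mulrC. Qed.



Section Gen.
Variables (n : nat) (R : comNzRingType).

Lemma mpoly_ind' (P : {mpoly R[n]} -> Prop) :
  (forall c, P c%:MP) -> (forall i, P 'X_i) ->
  (forall p q, P p -> P q -> P (p + q)) ->
  (forall p q, P p -> P q -> P (p * q)) -> forall p, P p.
Proof.
move=> HC HX HD HM p; rewrite (mpolyE p); elim/big_ind: _ => //.
  by have := HC 0; rewrite mpolyC0.
move=> m _; rewrite -mul_mpolyC mpolyXE_id; apply: (HM); first exact: HC.
elim/big_ind: _ => //; first by have := HC 1; rewrite mpolyC1.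
move=> i _; move: (m i) => k; elim: k => [|k IH]; first by rewrite expr0; have := HC 1; rewrite mpolyC1.
by rewrite exprS; apply: (HM).
Qed.

Lemma mpoly_rmorph_eq (S : nzRingType) (g1 g2 : {rmorphism {mpoly R[n]} -> S}) :
  (forall c, g1 c%:MP = g2 c%:MP) -> (forall i, g1 'X_i = g2 'X_i) -> g1 =1 g2.
Proof.
move=> HC HX; apply: mpoly_ind' => // p q E1 E2; by rewrite ?rmorphD ?rmorphM E1 E2.
Qed.

Lemma mmap_eq_supp (S : nzRingType) (f : R -> S) (h1 h2 : 'I_n -> S) (T : pred 'I_n) p :
  (forall i, T i -> h1 i = h2 i) ->
  (forall m, m \in msupp p -> forall i, ~~ T i -> m i = 0%N) ->
  mmap f h1 p = mmap f h2 p.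
Proof.
move=> Hh Hs; rewrite /mmap; apply: eq_big_seq => m Hm; congr (_ * _).
rewrite /mmap1; apply: eq_bigr => i _.
case: (boolP (T i)) => Ti; first by rewrite Hh.
by rewrite Hs // !expr0.
Qed.

Lemma mmapXU (S : comNzRingType) (f : {rmorphism R -> S}) (h : 'I_n -> S) i :
  mmap f h 'X_i = h i.
Proof. by rewrite mmapX mmap1U. Qed.

End Gen.

Lemma msupp_mmapX (a b : nat) (K : comNzRingType) (tau : 'I_a -> 'I_b) (p : {mpoly K[a]}) :
  forall m, m \in msupp (mmap (@mpolyC b K) (fun i => 'X_(tau i)) p) ->
  forall j, (forall i, tau i != j) -> m j = 0%N.
Proof.
move=> m; rewrite /mmap => /msupp_sum_le /flattenP [s /mapP [mu _ ->]].
rewrite mul_mpolyC => /msuppZ_le.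
have -> : mmap1 (fun i => 'X_(tau i)) mu = 'X_[\sum_(i < a) (U_(tau i) *+ mu i)%MM] :> {mpoly K[b]}.
  by rewrite /mmap1 mprodXnE.
rewrite msuppX inE => /eqP -> j Hj.
rewrite mnm_sumE big1 // => i _; by rewrite mulmnE mnm1E (negbTE (Hj i)).
Qed.

From mathcomp Require Import ring.

Lemma unlift_widen n (i : 'I_n) : unlift ord_max (widen_ord (leqnSn n) i) = Some i.
Proof.
have -> : widen_ord (leqnSn n) i = lift ord_max i.
  by apply: val_inj; rewrite /= /bump leqNgt ltn_ord.
exact: liftK.
Qed.

Lemma split_lshift a b (j : 'I_a) : split (lshift b j) = inl j.
Proof. exact: (unsplitK (inl j)). Qed.
Lemma split_rshift a b (k : 'I_b) : split (rshift a k) = inr k.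
Proof. exact: (unsplitK (inr k)). Qed.

Lemma mmap_eq_fun n (R : comNzRingType) (S : nzRingType) (f : R -> S) (h1 h2 : 'I_n -> S) p :
  h1 =1 h2 -> mmap f h1 p = mmap f h2 p.
Proof. move=> E; apply: (@mmap_eq_supp _ _ _ f h1 h2 predT) => // i _; exact: E. Qed.

Lemma mmap_id n (R : comNzRingType) (p : {mpoly R[n]}) :
  mmap (@mpolyC n R) (fun i => 'X_i) p = p.
Proof.
rewrite -[RHS](comp_mpoly_id p) /comp_mpoly; apply: mmap_eq_fun => i.
by rewrite tnth_mktuple.
Qed.

Lemma mmapCg n (R : comNzRingType) (S : nzRingType) (f : R -> S) h c :
  f 0 = 0 -> mmap f h c%:MP_[n] = f c.
Proof.
move=> f0; rewrite /mmap msuppC; case: eqP => [->|_]; first by rewrite big_nil f0.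
by rewrite big_seq1 mmap11 mulr1 mcoeffC eqxx mulr1.
Qed.

Lemma mmapXg n (R : comNzRingType) (S : nzRingType) (f : R -> S) h (i : 'I_n) :
  f 1 = 1 -> mmap f h 'X_i = h i.
Proof. by move=> f1; rewrite /mmap msuppX big_seq1 mcoeffX eqxx f1 mul1r mmap1U. Qed.

Lemma mmap_comp n (R : comNzRingType) (S S' : comNzRingType) (f : R -> S)
  (g : {rmorphism S -> S'}) (h : 'I_n -> S) p :
  g (mmap f h p) = mmap (g \o f) (g \o h) p.
Proof.
rewrite /mmap rmorph_sum; apply: eq_bigr => mu _; rewrite rmorphM /mmap1 rmorph_prod.
by congr (_ * _); apply: eq_bigr => i _; rewrite rmorphXn.
Qed.

Lemma mmap_eq_f n (R : comNzRingType) (S : nzRingType) (f1 f2 : R -> S) (h : 'I_n -> S) p :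
  f1 =1 f2 -> mmap f1 h p = mmap f2 h p.
Proof. by move=> E; rewrite /mmap; apply: eq_bigr => mu _; rewrite E. Qed.

Lemma tofrac_sum (R0 : idomainType) r (F0 : 'I_r -> R0) :
  FracField.tofrac (\sum_(i < r) F0 i) = \sum_(i < r) FracField.tofrac (F0 i).
Proof. exact: (big_morph _ (@tofracD R0) (@tofrac0 R0)). Qed.

Section Main.
Variables (K : fieldType) (d m : nat).
Local Notation n := (d + m)%N.
Local Notation A := {mpoly K[d + m]}.
Local Notation B := {mpoly K[d]}.
Local Notation F := (KY K d).
Local Notation R := {mpoly F[m]}.
Local Notation At := {mpoly K[(d + m).+1]}.
Local Notation tof := (@FracField.tofrac B).

Definition cfR : K -> R := (@mpolyC m F) \o tof \o (@mpolyC d K).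
Definition hv (i : 'I_(d + m)) : R := match split i with
                              | inl j => (tof ('X_j))%:MP
                              | inr k => 'X_k
                              end.
Lemma toKYZE (p : A) : toKYZ p = mmap cfR hv p. Proof. by []. Qed.

Definition hq (i : 'I_n.+1) : A := match unlift ord_max i with Some j => 'X_j | None => 0 end.
Definition hwid (i : 'I_n) : At := 'X_(widen_ord (leqnSn n) i).
Lemma toKXtE (p : A) : toKXt p = mmap (@mpolyC _ K) hwid p. Proof. by []. Qed.
HB.instance Definition _ := GRing.RMorphism.copy (@toKXt K n) (mmap (@mpolyC _ K) hwid).
HB.instance Definition _ := GRing.RMorphism.copy (@toKYZ K d m) (mmap cfR hv).
Definition Q (p : At) : A := mmap (@mpolyC _ K) hq p.
HB.instance Definition _ := GRing.RMorphism.copy Q (mmap (@mpolyC _ K) hq).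


Lemma QK (p : A) : Q (toKXt p) = p.
Proof.
elim/mpoly_ind': p => [c|i|p q E1 E2|p q E1 E2].
- by rewrite toKXtE /Q !mmapC.
- by rewrite toKXtE /Q mmapXU /hwid mmapXU /hq unlift_widen.
- by rewrite !rmorphD /= -{2}E1 -{2}E2.
- by rewrite !rmorphM /= -{2}E1 -{2}E2.
Qed.

Lemma toKXt_inj : injective (@toKXt K n).
Proof. by move=> p q E; rewrite -(QK p) -(QK q) E. Qed.

Lemma toKXtQ (p : At) : (forall mu, mu \in msupp p -> mu ord_max = 0%N) ->
  toKXt (Q p) = p.
Proof.
move=> Hp.
have -> : toKXt (Q p) = mmap (@mpolyC _ K) (fun i => toKXt (hq i)) p.
  elim/mpoly_ind': p {Hp} => [c|i|p q E1 E2|p q E1 E2].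
  - by rewrite /Q !mmapC toKXtE mmapC.
  - by rewrite /Q !mmapXU.
  - by rewrite /Q !rmorphD /= -E1 -E2.
  - by rewrite /Q !rmorphM /= -E1 -E2.
rewrite -[RHS]mmap_id; apply: (@mmap_eq_supp _ _ _ _ _ _ (fun i => i != ord_max)).
  move=> i; rewrite /hq; case: unliftP => [j ->|->]; last by rewrite eqxx.
  move=> _; rewrite toKXtE mmapXU /hwid; congr 'X_(_); apply: val_inj; by rewrite /= /bump leqNgt ltn_ord.
move=> mu Hmu i; rewrite negbK => /eqP ->; exact: Hp.
Qed.

Definition L (b : B) : A := mmap (@mpolyC _ K) (fun j => 'X_(lshift m j)) b.
HB.instance Definition _ := GRing.RMorphism.copy L (mmap (@mpolyC _ K) (fun j => 'X_(lshift m j))).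

Lemma toKYZ_L (b : B) : toKYZ (L b) = (tof b)%:MP.
Proof.
elim/mpoly_ind': b => [c|i|p q E1 E2|p q E1 E2].
- by rewrite /L mmapC toKYZE mmapC.
- by rewrite /L mmapXU toKYZE mmapXU /hv split_lshift.
- by rewrite /L rmorphD /= rmorphD /= E1 E2 !rmorphD.
- by rewrite /L rmorphM /= rmorphM /= E1 E2 !rmorphM.
Qed.

Definition hphi (i : 'I_n) : {mpoly B[m]} := match split i with
                              | inl j => ('X_j)%:MP
                              | inr k => 'X_k
                              end.
Definition phi (p : A) : {mpoly B[m]} := mmap ((@mpolyC m B) \o (@mpolyC d K)) hphi p.
HB.instance Definition _ := GRing.RMorphism.copy phi (mmap ((@mpolyC m B) \o (@mpolyC d K)) hphi).
Definition psi (p : {mpoly B[m]}) : A := mmap L (fun k => 'X_(rshift d k)) p.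
HB.instance Definition _ := GRing.RMorphism.copy psi (mmap L (fun k => 'X_(rshift d k))).

Lemma psi_phi (p : A) : psi (phi p) = p.
Proof.
elim/mpoly_ind': p => [c|i|p q E1 E2|p q E1 E2].
- rewrite /psi /phi mmapCg /=; last by rewrite !mpolyC0.
  by rewrite mmapCg ?mpolyC0 // /L mmapCg ?mpolyC0.
- rewrite /phi mmapXg /=; last by rewrite !mpolyC1.
  rewrite /hphi; case: splitP => j Ej.
  + rewrite /psi mmapCg; last exact: rmorph0.
    rewrite /L mmapXg ?mpolyC1 //; congr 'X_(_); exact: val_inj.
  + rewrite /psi mmapXg; last exact: rmorph1.
    congr 'X_(_); exact: val_inj.
- by rewrite !rmorphD; congr (_ + _); [exact: E1 | exact: E2].
- by rewrite !rmorphM; congr (_ * _); [exact: E1 | exact: E2].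
Qed.

Lemma toKYZ_phi (p : A) : toKYZ p = map_mpoly tof (phi p).
Proof.
elim/mpoly_ind': p => [c|i|p q E1 E2|p q E1 E2].
- rewrite toKYZE /phi mmapCg; last exact: rmorph0.
  rewrite mmapCg; last by rewrite /= !mpolyC0.
  by rewrite /= map_mpolyC.
- rewrite toKYZE /phi mmapXg; last exact: rmorph1.
  rewrite mmapXg; last by rewrite /= !mpolyC1.
  rewrite /hv /hphi; case: (split i) => j.
  + by rewrite map_mpolyC.
  + by rewrite map_mpolyX.
- by rewrite !rmorphD; congr (_ + _); [exact: E1 | exact: E2].
- by rewrite !rmorphM; congr (_ * _); [exact: E1 | exact: E2].
Qed.

Lemma toKYZ_inj : injective (@toKYZ K d m).
Proof.
move=> p q E; apply/eqP; rewrite -subr_eq0; apply/eqP.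
have E0 : toKYZ (p - q) = 0 by rewrite rmorphB; apply/eqP; rewrite subr_eq0; apply/eqP; exact: E.
have : phi (p - q) = 0.
  apply/mpolyP => mu; move: E0; rewrite toKYZ_phi => /mpolyP /(_ mu).
  rewrite mcoeff_map_mpoly mcoeff0 mcoeff0 => /eqP; rewrite tofrac_eq0 => /eqP ->.
  by [].
by move=> H; rewrite -(psi_phi (p - q)) H rmorph0.
Qed.

Lemma toKYZD (p q : A) : toKYZ (p + q) = toKYZ p + toKYZ q. Proof. exact: rmorphD. Qed.
Lemma toKYZM (p q : A) : toKYZ (p * q) = toKYZ p * toKYZ q. Proof. exact: rmorphM. Qed.
Lemma toKYZX (p : A) k : toKYZ (p ^+ k) = toKYZ p ^+ k. Proof. exact: rmorphXn. Qed.
Lemma toKYZ_sum r (F0 : 'I_r -> A) : toKYZ (\sum_(i < r) F0 i) = \sum_(i < r) toKYZ (F0 i).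
Proof. exact: rmorph_sum. Qed.
Lemma toKXtD (p q : A) : toKXt (p + q) = toKXt p + toKXt q. Proof. exact: rmorphD. Qed.
Lemma toKXtB (p q : A) : toKXt (p - q) = toKXt p - toKXt q. Proof. exact: rmorphB. Qed.
Lemma toKXtM (p q : A) : toKXt (p * q) = toKXt p * toKXt q. Proof. exact: rmorphM. Qed.
Lemma toKXtX (p : A) k : toKXt (p ^+ k) = toKXt p ^+ k. Proof. exact: rmorphXn. Qed.
Lemma toKXt_sum r (F0 : 'I_r -> A) : toKXt (\sum_(i < r) F0 i) = \sum_(i < r) toKXt (F0 i).
Proof. exact: rmorph_sum. Qed.

Lemma clear_den (q : R) : exists D : B, D != 0 /\ exists a : A, (tof D)%:MP * q = toKYZ a.
Proof.
elim/mpoly_ind': q => [c|k|p q [D1 [nz1 [a1 E1]]] [D2 [nz2 [a2 E2]]]|p q [D1 [nz1 [a1 E1]]] [D2 [nz2 [a2 E2]]]].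
- have [a [b [bnz ->]]] := fracE c.
  exists b; split => //; exists (L a).
  by rewrite toKYZ_L -mpolyCM mulrC divfK // tofrac_eq0.
- exists 1; split; first exact: oner_neq0.
  exists 'X_(rshift d k).
  rewrite tofrac1 mpolyC1 mul1r toKYZE mmapXg; last exact: rmorph1.
  by rewrite /hv split_rshift.
- exists (D1 * D2); split; first by rewrite mulf_neq0.
  exists (L D2 * a1 + L D1 * a2).
  rewrite toKYZD !toKYZM !toKYZ_L -E1 -E2 tofracM mpolyCM; ring.
- exists (D1 * D2); split; first by rewrite mulf_neq0.
  exists (a1 * a2).
  rewrite !toKYZM -E1 -E2 tofracM mpolyCM; ring.
Qed.


Lemma toKXt_L (b : B) :
  toKXt (L b) = mmap (@mpolyC _ K) (fun j => 'X_(widen_ord (leqnSn n) (lshift m j))) b.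
Proof.
rewrite /L mmap_comp; apply: eq_trans (mmap_eq_f _ _ _) _.
  by move=> c /=; rewrite toKXtE mmapCg ?mpolyC0.
apply: mmap_eq_fun => j /=; by rewrite toKXtE mmapXg ?mpolyC1.
Qed.

Lemma vars_toKXt_L (b : B) : vars_in (Yset_t d m) (toKXt (L b)).
Proof.
rewrite toKXt_L => mu Hmu i Hi; apply: (msupp_mmapX Hmu) => j.
apply/negP => /eqP Ej; move: Hi; rewrite /Yset_t inE -Ej /=.
by rewrite ltn_ord.
Qed.


Lemma dir1 r (h : 'I_r -> A) (f : A) :
  in_radical (fun i => toKYZ (h i)) (toKYZ f) -> ideal_meets (rabino_gens h f) (Yset_t d m).
Proof.
case=> k [c Hc].
have /fin_all_exists [D HD] : forall i, exists D0 : B, D0 != 0 /\ exists a, (tof D0)%:MP * c i = toKYZ a.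
  by move=> i; exact: clear_den.
have /fin_all_exists [a Ha] : forall i, exists a, (tof (D i))%:MP * c i = toKYZ a.
  by move=> i; case: (HD i) => _ [a Ha]; exists a.
set P := \prod_(i < r) D i.
have Pnz : P != 0 by apply/prodf_neq0 => i _; case: (HD i).
pose E i := \prod_(j < r | j != i) D j.
have key : L P * f ^+ k = \sum_(i < r) (L (E i) * a i) * h i.
  apply: toKYZ_inj; rewrite toKYZM toKYZX toKYZ_L Hc toKYZ_sum mulr_sumr.
  apply: eq_bigr => i _; rewrite !toKYZM toKYZ_L -(Ha i) /P (bigD1 i) //= tofracM mpolyCM.
  rewrite /E; ring.
set Pt := toKXt (L P).
exists Pt.
  apply/negP => /eqP H0.
  have LP0 : L P = 0 by apply: toKXt_inj; rewrite -/Pt H0 rmorph0.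
  have : toKYZ (L P) = 0 by rewrite LP0 rmorph0.
  by rewrite toKYZ_L => /eqP; rewrite mpolyC_eq0 tofrac_eq0 (negbTE Pnz).
split; last exact: vars_toKXt_L.
set T := tvar K n; set ft := toKXt f.
exists (fun j => match unlift ord_max j with
         | Some i => T ^+ k * toKXt (L (E i) * a i)
         | None => - Pt * \sum_(l < k) (ft * T) ^+ l end).
rewrite big_ord_recr /= /rabino_gens unlift_none.
under eq_bigr => i _ do rewrite unlift_widen.
have -> : \sum_(i < r) T ^+ k * toKXt (L (E i) * a i) * toKXt (h i) = T ^+ k * (Pt * ft ^+ k).
  rewrite /Pt /ft -toKXtX -toKXtM key toKXt_sum mulr_sumr.
  by apply: eq_bigr => i _; rewrite [in RHS]toKXtM mulrA.
rewrite -/ft -/T.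
have H1 : (ft * T - 1) * \sum_(l < k) (ft * T) ^+ l = (ft * T) ^+ k - 1 by rewrite subrX1.
rewrite -mulrA [X in - Pt * X]mulrC H1 exprMn; ring.
Qed.


Section Dir2.
Variable (f : A).
Hypothesis fnz : toKYZ f != 0.
Local Notation Lf := {fraction R}.
Local Notation tofR := (@FracField.tofrac R).
Local Notation f' := (toKYZ f).

Definition hve (i : 'I_n.+1) : Lf :=
  match unlift ord_max i with Some j => tofR (hv j) | None => (tofR f')^-1 end.
Definition cfe : K -> Lf := tofR \o cfR.
Definition ev (p : At) : Lf := mmap cfe hve p.
HB.instance Definition _ := GRing.RMorphism.copy ev (mmap cfe hve).

Lemma evD (p q : At) : ev (p + q) = ev p + ev q. Proof. exact: rmorphD. Qed.
Lemma evM (p q : At) : ev (p * q) = ev p * ev q. Proof. exact: rmorphM. Qed.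
Lemma evB (p q : At) : ev (p - q) = ev p - ev q. Proof. exact: rmorphB. Qed.
Lemma ev1 : ev 1 = 1. Proof. exact: rmorph1. Qed.
Lemma ev_sum r (F0 : 'I_r -> At) : ev (\sum_(i < r) F0 i) = \sum_(i < r) ev (F0 i).
Proof. exact: rmorph_sum. Qed.

Lemma ev_toKXt (q : A) : ev (toKXt q) = tofR (toKYZ q).
Proof.
elim/mpoly_ind': q => [c|i|p q E1 E2|p q E1 E2].
- rewrite toKXtE mmapCg; last exact: mpolyC0.
  rewrite /ev mmapCg; last exact: rmorph0.
  rewrite toKYZE mmapCg; last exact: rmorph0.
  reflexivity.
- rewrite toKXtE mmapXg; last exact: mpolyC1.
  rewrite /hwid /ev mmapXg; last exact: rmorph1.
  rewrite /hve unlift_widen toKYZE mmapXg; last exact: rmorph1.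
  reflexivity.
- by rewrite toKXtD evD E1 E2 toKYZD tofracD.
- by rewrite toKXtM evM E1 E2 toKYZM tofracM.
Qed.


Lemma ev_T : ev (tvar K n) = (tofR f')^-1.
Proof.
rewrite /ev /tvar mmapXg; last exact: rmorph1.
by rewrite /hve unlift_none.
Qed.

Lemma tofR_f_neq0 : tofR f' != 0.
Proof. by rewrite tofrac_eq0. Qed.

Lemma clear2 (q : At) : exists N a, tofR f' ^+ N * ev q = tofR a.
Proof.
elim/mpoly_ind': q => [c|i|p q [N1 [a1 E1]] [N2 [a2 E2]]|p q [N1 [a1 E1]] [N2 [a2 E2]]].
- exists 0%N, (cfR c); rewrite expr0 mul1r /ev mmapCg; last exact: rmorph0.
  reflexivity.
- rewrite /ev mmapXg; last exact: rmorph1.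
  rewrite /hve; case: unliftP => [j _|_].
  + by exists 0%N, (hv j); rewrite expr0 mul1r.
  + exists 1%N, 1; rewrite expr1 mulfV; last exact: tofR_f_neq0.
    by rewrite tofrac1.
- exists (N1 + N2)%N, (f' ^+ N2 * a1 + f' ^+ N1 * a2).
  rewrite evD exprD tofracD !tofracM !tofracXn -E1 -E2; ring.
- exists (N1 + N2)%N, (a1 * a2).
  rewrite evM exprD tofracM -E1 -E2; ring.
Qed.


Definition cF : K -> F := tof \o (@mpolyC d K).
Definition hF (i : 'I_n.+1) : F := if (insub (val i) : option 'I_d) is Some j then tof 'X_j else 0.

Lemma toKYZ_Q (p : At) : vars_in (Yset_t d m) p -> toKYZ (Q p) = (mmap cF hF p)%:MP.
Proof.
move=> Hv.
rewrite /Q mmap_comp.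
rewrite (@mmap_eq_supp _ _ _ _ _ (fun i => (hF i)%:MP) (fun i => (i < d)%N)); first last.
- move=> mu Hmu i Hi; apply: Hv => //; by rewrite /Yset_t inE.
- move=> i Hi /=; rewrite /hq /hF.
  case: insubP => [j'' _ Ej''|]; last by rewrite Hi.
  case: unliftP => [j Ej|Ej]; last by move: Hi; rewrite Ej /= ltnNge leq_addr.
  rewrite toKYZE mmapXg; last exact: rmorph1.
  have Eji : nat_of_ord j = nat_of_ord i by rewrite Ej /= /bump leqNgt ltn_ord add0n.
  rewrite /hv; case: splitP => j' Ej'.
  + congr (tof 'X_(_))%:MP; apply: val_inj.
    by rewrite Ej''; change (nat_of_ord j' = nat_of_ord i); rewrite -Eji Ej'.
  + exfalso; move: Hi; rewrite -Eji Ej'.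
    by rewrite ltnNge leq_addr.
rewrite (@mmap_comp _ _ _ _ cF (@mpolyC m F)).
apply: mmap_eq_f => c /=.
rewrite toKYZE mmapCg; last exact: rmorph0.
reflexivity.
Qed.


Lemma dir2_core r (h : 'I_r -> A) :
  ideal_meets (rabino_gens h f) (Yset_t d m) -> in_radical (fun i => toKYZ (h i)) f'.
Proof.
case=> p pnz [[c Hc] Hv].
have tfree : forall mu, mu \in msupp p -> mu ord_max = 0%N.
  move=> mu Hmu; apply: (Hv _ Hmu); by rewrite /Yset_t inE /= ltnNge leq_addr.
have pE : toKXt (Q p) = p := toKXtQ tfree.
set P0 := mmap cF hF p.
have HQ : toKYZ (Q p) = P0%:MP := toKYZ_Q Hv.
have P0nz : P0 != 0.
  apply/negP => /eqP P00; move: pnz; rewrite -pE.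
  have -> : Q p = 0 by apply: toKYZ_inj; rewrite HQ P00 mpolyC0 rmorph0.
  by rewrite rmorph0 eqxx.
have evp : ev p = tofR (P0%:MP) by rewrite -pE ev_toKXt HQ.
clearbody P0.
have evp2 : ev p = \sum_(i < r) ev (c (widen_ord (leqnSn r) i)) * tofR (toKYZ (h i)).
  rewrite {1}Hc ev_sum big_ord_recr /= /rabino_gens unlift_none.
  rewrite evM evB evM ev_toKXt ev_T ev1 mulfV; last exact: tofR_f_neq0.
  rewrite subrr mulr0 addr0; apply: eq_bigr => i _.
  by rewrite unlift_widen evM ev_toKXt.
have /fin_all_exists [N HN] : forall i : 'I_r, exists N0 a, tofR f' ^+ N0 * ev (c (widen_ord (leqnSn r) i)) = tofR a.
  by move=> i; exact: clear2.
have /fin_all_exists [a Ha] : forall i : 'I_r, exists a, tofR f' ^+ N i * ev (c (widen_ord (leqnSn r) i)) = tofR a.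
  by move=> i; exact: HN.
set Nt := (\sum_(i < r) N i)%N.
have leN : forall i, (N i <= Nt)%N by move=> i; rewrite /Nt (bigD1 i) //= leq_addr.
clearbody Nt.
have key : f' ^+ Nt * P0%:MP = \sum_(i < r) (f' ^+ (Nt - N i) * a i) * toKYZ (h i).
  apply/eqP; rewrite -tofrac_eq; apply/eqP.
  have evp3 := etrans (esym evp) evp2.
  rewrite tofracM tofracXn evp3 mulr_sumr tofrac_sum; apply: eq_bigr => i _.
  rewrite !tofracM tofracXn -(Ha i) -{1}(subnK (leN i)) exprD; ring.
exists Nt, (fun i => (P0^-1)%:MP * (f' ^+ (Nt - N i) * a i)).
have -> : f' ^+ Nt = (P0^-1)%:MP * (f' ^+ Nt * P0%:MP).
  rewrite mulrCA -mpolyCM mulVf; last exact: P0nz.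
  by rewrite mpolyC1 mulr1.
rewrite key mulr_sumr; apply: eq_bigr => i _; by rewrite mulrA.
Qed.

End Dir2.
End Main.

Theorem lemma2 (K : fieldType) (d m r : nat)
  (h : 'I_r -> {mpoly K[d + m]}) (f : {mpoly K[d + m]}) :
  max_indep_set h (Yset d m) ->
  (in_radical (fun i => toKYZ (h i)) (toKYZ f) <->
   ideal_meets (rabino_gens h f) (Yset_t d m)).
Proof.
move=> _; split.
- exact: dir1.
- move=> Hm; case: (eqVneq (toKYZ f) 0) => [f0|fnz].
  + exists 1%N, (fun _ => 0); rewrite expr1 f0 big1 //.
    by move=> i _; rewrite mul0r.
  + exact: (dir2_core fnz Hm).
Qed.
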